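(* Suppose Assumption 1 holds. Let $x\in\operatorname{dom}\psi$, let $H$ be a symmetric matrix with $\lambda_{\min}(H)=\sigma>0$, and let $d$ satisfy the $\eta$-inexactness condition for $Q^x_H$ for some $\eta\in[0,1)$. Then, with $\Delta \coloneqq \nabla f(x)^Td + \psi(x+d)-\psi(x)$, $$\Delta \le -\frac{1}{1+\sqrt\eta}\, d^THd \le -\frac{\sigma}{1+\sqrt\eta}\|d\|^2.$$ Moreover, for any $\beta,\gamma\in(0,1)$ the backtracking procedure that returns $\alpha=\beta^i$ for the smallest nonnegative integer $i$ with $F(x+\alpha d)\le F(x)+\alpha\gamma\Delta$ terminates after finitely many steps and $$\alpha\ge \bar\alpha\coloneqq \min\left\{1,\ \frac{2\beta(1-\gamma)\sigma}{L(1+\sqrt\eta)}\right\}.$$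
   Context: Problem setting: $F(x)=f(x)+\psi(x)$ on $\mathbb{R}^n$. Assumption 1: $f:\mathbb{R}^n\to\mathbb{R}$ is differentiable with $L$-Lipschitz continuous gradient for some $L>0$; $\psi:\mathbb{R}^n\to\mathbb{R}\cup\{+\infty\}$ is convex, proper and closed; $F$ is bounded below; and the solution set $\Omega=\{x: F(x)=F^*\}$, $F^*=\inf F$, is nonempty. For $x\in\mathbb{R}^n$ and a symmetric matrix $H$, $Q^x_H(d) \coloneqq \nabla f(x)^T d + \frac12 d^T H d + \psi(x+d) - \psi(x)$ (so $Q^x_H(0)=0$) and $Q^*\coloneqq\inf_d Q^x_H(d)$. A vector $d$ satisfies the $\eta$-inexactness condition (for $Q=Q^x_H$) if $Q(d)-Q^*\le \eta(Q(0)-Q^* )$, equivalently $Q(d)\le(1-\eta)Q^*$. $\lambda_{\min}(H)$ denotes the smallest eigenvalue of $H$. *)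

(* Defs.v *)
From mathcomp Require Import all_boot.
From Stdlib Require Import Reals.
Set Implicit Arguments.
Unset Strict Implicit.
Open Scope R_scope.

Definition vec (n : nat) := 'I_n -> R.
Definition mat (n : nat) := 'I_n -> 'I_n -> R.

Definition vsum (n : nat) (g : 'I_n -> R) : R := \big[Rplus/R0]_(i : 'I_n) g i.
Definition dot (n : nat) (u v : vec n) : R := vsum (fun i => u i * v i).
Definition vnorm (n : nat) (v : vec n) : R := sqrt (dot v v).
Definition vadd (n : nat) (u v : vec n) : vec n := fun i => u i + v i.
Definition vsub (n : nat) (u v : vec n) : vec n := fun i => u i - v i.
Definition vscale (n : nat) (a : R) (v : vec n) : vec n := fun i => a * v i.
Definition mulmv (n : nat) (H : mat n) (v : vec n) : vec n :=
  fun i => vsum (fun j => H i j * v j).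

Definition sym_mat (n : nat) (H : mat n) : Prop := forall i j, H i j = H j i.
Definition is_eigenvalue (n : nat) (H : mat n) (lam : R) : Prop :=
  exists v : vec n, (exists i, v i <> 0) /\ forall i, mulmv H v i = lam * v i.
Definition lambda_min_is (n : nat) (H : mat n) (s : R) : Prop :=
  is_eigenvalue H s /\ forall lam, is_eigenvalue H lam -> s <= lam.

Definition is_gradient (n : nat) (f : vec n -> R) (g : vec n -> vec n) : Prop :=
  forall x eps, 0 < eps -> exists delta, 0 < delta /\
    forall h, vnorm h < delta ->
      Rabs (f (vadd x h) - f x - dot (g x) h) <= eps * vnorm h.
Definition lipschitz_map (n : nat) (g : vec n -> vec n) (L : R) : Prop :=
  forall x y, vnorm (vsub (g x) (g y)) <= L * vnorm (vsub x y).

(* extended reals R u {+oo}: Some r = r, None = +oo *)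
Definition ext_le (a b : option R) : Prop :=
  match b with
  | None => True
  | Some b' => match a with Some a' => a' <= b' | None => False end
  end.
Definition in_dom (n : nat) (psi : vec n -> option R) (x : vec n) : Prop :=
  exists a, psi x = Some a.

Definition ext_convex (n : nat) (psi : vec n -> option R) : Prop :=
  forall x y a b t, psi x = Some a -> psi y = Some b -> 0 <= t <= 1 ->
    ext_le (psi (vadd (vscale t x) (vscale (1 - t) y))) (Some (t * a + (1 - t) * b)).
Definition ext_proper (n : nat) (psi : vec n -> option R) : Prop :=
  exists x, in_dom psi x.
(* closed: the epigraph {(x,t) | psi x <= t} is closed *)
Definition vec_cv (n : nat) (xs : nat -> vec n) (x : vec n) : Prop :=
  Un_cv (fun k => vnorm (vsub (xs k) x)) 0.
Definition ext_closed (n : nat) (psi : vec n -> option R) : Prop :=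
  forall (xs : nat -> vec n) (ts : nat -> R) x t,
    (forall k, ext_le (psi (xs k)) (Some (ts k))) ->
    vec_cv xs x -> Un_cv ts t -> ext_le (psi x) (Some t).

Definition Fext (n : nat) (f : vec n -> R) (psi : vec n -> option R) (x : vec n)
  : option R := option_map (fun p => f x + p) (psi x).

Definition assumption1 (n : nat) (f : vec n -> R) (gradf : vec n -> vec n) (L : R)
    (psi : vec n -> option R) : Prop :=
  is_gradient f gradf /\ 0 < L /\ lipschitz_map gradf L /\
  ext_convex psi /\ ext_proper psi /\ ext_closed psi /\
  (exists m, forall x a, Fext f psi x = Some a -> m <= a) /\
  (exists xs a, Fext f psi xs = Some a /\ forall y b, Fext f psi y = Some b -> a <= b).

Definition Qmodel (n : nat) (gradf : vec n -> vec n) (psi : vec n -> option R)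
    (x : vec n) (px : R) (H : mat n) (d : vec n) : option R :=
  option_map (fun p => dot (gradf x) d + / 2 * dot d (mulmv H d) + p - px)
             (psi (vadd x d)).

Definition is_glb (S : R -> Prop) (m : R) : Prop :=
  (forall s, S s -> m <= s) /\ (forall m', (forall s, S s -> m' <= s) -> m' <= m).

(* eta-inexactness: Q(d) - Qstar <= eta (Q(0) - Qstar), Q(0) = 0, Qstar = inf Q *)
Definition eta_inexact (n : nat) (Q : vec n -> option R) (eta : R) (d : vec n) : Prop :=
  exists Qstar qd, is_glb (fun q => exists d', Q d' = Some q) Qstar /\
    Q d = Some qd /\ qd - Qstar <= eta * (0 - Qstar).

(* Main.v *)
Require Import Defs.
From mathcomp Require Import all_boot all_algebra.
From mathcomp Require Import Rstruct.
From Stdlib Require Import Reals Lra Psatz FunctionalExtensionality Classical.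
Import GRing.Theory Num.Theory.
Open Scope R_scope.
Set Implicit Arguments.
Unset Strict Implicit.

Section Lin.
Local Open Scope ring_scope.
Lemma vsumE n (g : 'I_n -> R) : vsum g = \sum_(i < n) g i.
Proof. reflexivity. Qed.

Lemma vsum_lin_r n (a b : R) (u v : 'I_n -> R) :
  vsum (fun i => a * u i + b * v i) = a * vsum u + b * vsum v.
Proof. by rewrite !vsumE big_split /= -!mulr_sumr. Qed.

Lemma vsum_ext n (u v : 'I_n -> R) : (forall i, u i = v i) -> vsum u = vsum v.
Proof. by move=> h; rewrite !vsumE; apply: eq_bigr => i _; rewrite h. Qed.

Lemma vsum_le_r n (u v : 'I_n -> R) : (forall i, (u i <= v i)%R) -> (vsum u <= vsum v)%R.
Proof. move=> h; rewrite !vsumE; apply/RleP; apply: ler_sum => i _; apply/RleP; exact: h. Qed.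

Lemma vsum_exchange n (F : 'I_n -> 'I_n -> R) :
  vsum (fun i => vsum (fun j => F i j)) = vsum (fun j => vsum (fun i => F i j)).
Proof. rewrite vsumE. under eq_bigr do rewrite vsumE. rewrite exchange_big /=.
  rewrite vsumE. by under [RHS]eq_bigr do rewrite vsumE. Qed.

Lemma vsum_mull_r n (a : R) (u : 'I_n -> R) : vsum (fun i => a * u i) = a * vsum u.
Proof. by rewrite !vsumE -mulr_sumr. Qed.

Lemma vsum_single_r n (u : 'I_n -> R) k : (forall i, (0 <= u i)%R) -> (u k <= vsum u)%R.
Proof. move=> h; rewrite vsumE; apply/RleP. rewrite (bigD1 k) //= lerDl.
  apply: sumr_ge0 => i _; apply/RleP; exact: h. Qed.
End Lin.
Lemma vsum_lin n (a b : R) (u v : 'I_n -> R) :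
  vsum (fun i => a * u i + b * v i) = a * vsum u + b * vsum v.
Proof. exact: vsum_lin_r. Qed.
Lemma vsum_le n (u v : 'I_n -> R) : (forall i, u i <= v i) -> vsum u <= vsum v.
Proof. exact: vsum_le_r. Qed.
Lemma vsum_mull n (a : R) (u : 'I_n -> R) : vsum (fun i => a * u i) = a * vsum u.
Proof. exact: vsum_mull_r. Qed.
Lemma vsum_single n (u : 'I_n -> R) k : (forall i, 0 <= u i) -> u k <= vsum u.
Proof. exact: vsum_single_r. Qed.

Lemma vsum_ge0 n (u : 'I_n -> R) : (forall i, 0 <= u i) -> 0 <= vsum u.
Proof. move=> h. apply Rle_trans with (vsum (fun _ : 'I_n => 0)).
  right. symmetry. rewrite vsumE. by apply: big1.
  apply vsum_le. exact h. Qed.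

Lemma vsum_eq0 n (u : 'I_n -> R) : (forall i, 0 <= u i) -> vsum u = 0 -> forall i, u i = 0.
Proof. move=> h hs i. have := @vsum_single n u i h. have := h i. lra. Qed.

Lemma dot_comm n (u v : vec n) : dot u v = dot v u.
Proof. apply vsum_ext => i; ring. Qed.

Lemma dot_linl n (a b : R) (u v w : vec n) :
  dot (fun i => a * u i + b * v i) w = a * dot u w + b * dot v w.
Proof. unfold dot. rewrite -vsum_lin. apply vsum_ext => i; ring. Qed.

Lemma dot_linr n (a b : R) (u v w : vec n) :
  dot w (fun i => a * u i + b * v i) = a * dot w u + b * dot w v.
Proof. rewrite dot_comm dot_linl (dot_comm u) (dot_comm v). done. Qed.

Lemma mulmv_lin n (M : mat n) (a b : R) (u v : vec n) :
  mulmv M (fun i => a * u i + b * v i) = fun i => a * mulmv M u i + b * mulmv M v i.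
Proof. apply functional_extensionality => i. unfold mulmv. rewrite -vsum_lin.
  apply vsum_ext => j; ring. Qed.

Lemma dot_ge0 n (v : vec n) : 0 <= dot v v.
Proof. apply vsum_ge0 => i. nra. Qed.

Lemma dot_eq0 n (v : vec n) : dot v v = 0 -> forall i, v i = 0.
Proof. move=> h i. have H0 : forall i, 0 <= v i * v i by move=> j; nra.
  have := @vsum_eq0 n (fun i => v i * v i) H0 h i. nra. Qed.

Lemma comp_le n (v : vec n) i : v i * v i <= dot v v.
Proof. apply (@vsum_single n (fun i => v i * v i)). move=> j. nra. Qed.

Lemma sym_dot n (M : mat n) u v : sym_mat M -> dot u (mulmv M v) = dot (mulmv M u) v.
Proof. move=> hs. unfold dot, mulmv.
  transitivity (vsum (fun i => vsum (fun j => u i * M i j * v j))).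
  apply vsum_ext => i. rewrite -vsum_mull. apply vsum_ext => j; ring.
  rewrite vsum_exchange. apply vsum_ext => j. rewrite Rmult_comm -vsum_mull.
  apply vsum_ext => i. rewrite hs. ring. Qed.

Lemma quad_disc (A B C : R) : 0 <= C -> (forall t, 0 <= A + 2*t*B + t*t*C) -> B*B <= A*C.
Proof. move=> hC h. destruct (Rle_lt_or_eq_dec 0 C hC) as [hc|hc].
  - have := h (- B / C). intro H1.
    have e : A + 2 * (- B / C) * B + (- B / C) * (- B / C) * C = (A*C - B*B)/C by field; lra.
    rewrite e in H1. have: 0 <= (A*C - B*B)/C * C by nra.
    have e2 : (A*C - B*B)/C * C = A*C - B*B by field; lra. rewrite e2. lra.
  - subst C. destruct (Req_dec B 0) as [hb|hb]. subst; nra.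
    have := h (-(A+1)/(2*B)). have e : A + 2 * (-(A+1)/(2*B)) * B = -1 by field.
    rewrite Rmult_0_r Rplus_0_r e. lra.
Qed.

Lemma CS n (u v : vec n) : dot u v * dot u v <= dot u u * dot v v.
Proof. apply quad_disc. apply dot_ge0. move=> t.
  have := dot_ge0 (fun i => 1 * u i + t * v i).
  rewrite dot_linl !dot_linr (dot_comm v u). nra. Qed.

Lemma semiCS n (M : mat n) (u v : vec n) : sym_mat M ->
  (forall w, 0 <= dot w (mulmv M w)) ->
  dot u (mulmv M v) * dot u (mulmv M v) <= dot u (mulmv M u) * dot v (mulmv M v).
Proof. move=> hs hp. apply quad_disc. apply hp. move=> t.
  have := hp (fun i => 1 * u i + t * v i).
  rewrite mulmv_lin dot_linl !dot_linr. have e : dot v (mulmv M u) = dot u (mulmv M v) by rewrite sym_dot // dot_comm.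
  rewrite e.
  nra. Qed.

Section Inv.
Local Open Scope ring_scope.
Lemma left_inv n (M : mat n) :
  (forall v : vec n, (forall i, mulmv M v i = 0) -> forall i, v i = 0) ->
  exists N : mat n, forall v i, mulmv N (mulmv M v) i = v i.
Proof.
move=> hinj.
pose A : 'M[R]_n := \matrix_(i, j) M j i.
have rowA : forall (v : vec n) i, ((\row_j v j) *m A) 0 i = mulmv M v i.
  move=> v i; rewrite mxE /mulmv vsumE; apply: eq_bigr => j _.
  by rewrite !mxE mulrC.
have hdet : \det A != 0.
  apply/det0P => -[r rne0 hr]; move/eqP: rne0; apply.
  apply/rowP => j; rewrite mxE.
  have hv := hinj (fun k => r 0 k).
  have -> : r = \row_k r 0 k by apply/rowP => k; rewrite mxE.
  rewrite mxE; apply: hv => i.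
  have := rowA (fun k => r 0 k) i.
  have -> : \row_j r 0 j = r by apply/rowP => k; rewrite mxE.
  by rewrite hr mxE => <-.
have hu : A \in unitmx by rewrite unitmxE unitfE.
exists (fun i k => invmx A k i) => v i.
have := congr1 (fun m : 'rV_n => m 0 i) (mulmxK hu (\row_j v j)).
rewrite /= mxE => <-. rewrite mxE /mulmv vsumE; apply: eq_bigr => k _.
by rewrite rowA mulrC.
Qed.
End Inv.

Lemma mulmv_bound n (M : mat n) : exists K, 0 <= K /\
  forall w, dot (mulmv M w) (mulmv M w) <= K * dot w w.
Proof.
exists (vsum (fun i => dot (fun j => M i j) (fun j => M i j))). split.
  apply vsum_ge0 => i; apply dot_ge0.
move=> w. rewrite Rmult_comm -vsum_mull. apply vsum_le => i.
have := CS (fun j => M i j) w. rewrite /mulmv.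
change (vsum (fun j => M i j * w j)) with (dot (fun j => M i j) w).
have := dot_ge0 w. have := dot_ge0 (fun j => M i j). nra.
Qed.

Lemma quad_bound n (M : mat n) : exists C, 0 < C /\
  forall w, Rabs (dot w (mulmv M w)) <= C * dot w w.
Proof.
have [K [hK h]] := mulmv_bound M. exists (K + 1). split. lra.
move=> w. have h1 := CS w (mulmv M w). have h2 := h w. have h3 := dot_ge0 w.
have h4 := dot_ge0 (mulmv M w).
set q := dot w (mulmv M w) in h1 *. set a := dot w w in h1 h2 h3 *.
set b := dot (mulmv M w) (mulmv M w) in h1 h2 h4.
have hq : q * q <= K * a * a by nra.
destruct (Rle_or_lt (Rabs q) ((K+1)*a)) as [|hc]; auto.
exfalso. have hq2 : q * q = Rabs q * Rabs q by rewrite -Rabs_mult Rabs_right; nra.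
have : (K+1)*a*((K+1)*a) < Rabs q * Rabs q. apply Rmult_le_0_lt_compat; nra.
nra.
Qed.

Lemma kernel_lemma n (M : mat n) : sym_mat M ->
  (forall w, 0 <= dot w (mulmv M w)) ->
  (forall e, 0 < e -> exists w, dot w w = 1 /\ dot w (mulmv M w) < e) ->
  exists v : vec n, (exists i, v i <> 0) /\ forall i, mulmv M v i = 0.
Proof.
move=> hs hp he. apply NNPP => hno.
have hinj : forall v : vec n, (forall i, mulmv M v i = 0) -> forall i, v i = 0.
  move=> v hv i. apply NNPP => hvi. apply hno. exists v. split; auto. exists i; auto.
have [N hN] := left_inv hinj.
have [KN [hKN hNb]] := mulmv_bound N.
have [C [hC hCb]] := quad_bound M.
have [w [hw1 hwe]] := he (1 / (KN * C + 1)) ltac:(apply Rdiv_lt_0_compat; nra).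
set p := dot (mulmv M w) (mulmv M w).
have e1 : mulmv N (mulmv M w) = w by apply functional_extensionality => i; apply hN.
have h1 : 1 <= KN * p. rewrite -hw1. have := hNb (mulmv M w). rewrite e1. done.
have h2 := semiCS w (mulmv M w) hs hp.
have e2 : dot w (mulmv M (mulmv M w)) = p by rewrite sym_dot.
rewrite e2 in h2.
have h3 := hCb (mulmv M w). fold p in h3.
have h4 := hp w. have h5 := hp (mulmv M w).
rewrite Rabs_right in h3; [|lra].
have hp0 : 0 < p by nra.
set q := dot w (mulmv M w) in h2 h4 hwe.
have h6 : p <= q * C.
  have : p * p <= q * (C * p) by nra. nra.
have h7 : q < 1 / (KN * C + 1) := hwe.
have h8 : q * (KN*C + 1) < 1. apply (Rmult_lt_compat_r (KN*C+1)) in h7; [|nra].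
  rewrite /Rdiv Rmult_1_l Rinv_l in h7; nra.
nra.
Qed.

Lemma dot_scalel n c (u v : vec n) : dot (fun i => c * u i) v = c * dot u v.
Proof. rewrite /dot -vsum_mull. apply vsum_ext => i; ring. Qed.
Lemma dot_scaler n c (u v : vec n) : dot v (fun i => c * u i) = c * dot v u.
Proof. rewrite dot_comm dot_scalel dot_comm //. Qed.
Lemma mulmv_scale n (M : mat n) c (u : vec n) : mulmv M (fun i => c * u i) = fun i => c * mulmv M u i.
Proof. apply functional_extensionality => i. rewrite /mulmv -vsum_mull. apply vsum_ext => j; ring. Qed.

Section Shift.
Local Open Scope ring_scope.
Lemma vsum_delta n (w : vec n) i : vsum (fun j => if i == j then w j else 0) = w i.
Proof.
rewrite vsumE (bigD1 i) //= eqxx big1 ?addr0 // => j hj.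
by rewrite eq_sym (negbTE hj).
Qed.
End Shift.

Lemma mulmv_shift n (H : mat n) (m : R) (w : vec n) i :
  mulmv (fun i j => H i j - (if i == j then m else 0)) w i = mulmv H w i - m * w i.
Proof. rewrite /mulmv.
  transitivity (vsum (fun j => 1 * (H i j * w j) + (-m) * (if i == j then w j else 0))).
  apply vsum_ext => j. case: (i == j); ring.
  rewrite vsum_lin vsum_delta. ring. Qed.


Lemma dot_zero_vec n (u v : vec n) : dot u u = 0 -> dot u v = 0.
Proof. move=> h. have hz := dot_eq0 h. rewrite /dot.
  transitivity (vsum (fun i : 'I_n => 0 * v i)). apply vsum_ext => i; rewrite hz //.
  rewrite vsum_mull. ring. Qed.

Lemma spectral_bound n (H : mat n) sigma : sym_mat H -> lambda_min_is H sigma ->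
  forall d, sigma * dot d d <= dot d (mulmv H d).
Proof.
move=> hs [_ hmin] d. apply Rnot_lt_le => hlt.
have [C [hC hCb]] := quad_bound H.
have hdd : 0 < dot d d.
  destruct (Rle_lt_or_eq_dec _ _ (dot_ge0 d)) as [|h0]; auto.
  rewrite (dot_zero_vec _ (esym h0)) -h0 in hlt. lra.
set T := fun r => exists w : vec n, dot w w = 1 /\ r = - dot w (mulmv H w).
have hT : bound T.
  exists C => r [w [hw ->]]. have := hCb w. rewrite hw. move=> h; have := RRle_abs (- dot w (mulmv H w)); rewrite Rabs_Ropp. lra.
set s := sqrt (dot d d).
have hs0 : 0 < s by apply sqrt_lt_R0.
have hss : s * s = dot d d by apply sqrt_sqrt; lra.
set d1 := fun i => / s * d i.
have hd1 : dot d1 d1 = 1.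
  rewrite /d1 dot_scalel dot_scaler -hss. field. lra.
have hqd1 : dot d1 (mulmv H d1) = dot d (mulmv H d) / dot d d.
  rewrite /d1 mulmv_scale dot_scalel dot_scaler -hss. field. lra.
have hTne : exists r, T r by exists (- dot d1 (mulmv H d1)); exists d1; split.
have [L [hub hlub]] := completeness T hT hTne.
set m := - L.
have hlow : forall w, dot w w = 1 -> m <= dot w (mulmv H w).
  move=> w hw. have := hub _ (ex_intro _ w (conj hw (erefl _))). rewrite /m. lra.
have happ : forall e, 0 < e -> exists w, dot w w = 1 /\ dot w (mulmv H w) < m + e.
  move=> e he. apply NNPP => hne.
  have : L <= L - e. apply hlub => r [w [hw ->]].
    have : ~ (dot w (mulmv H w) < m + e) by move=> hc; apply hne; exists w; auto.
    rewrite /m. lra.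
  lra.
have hmlt : m < sigma.
  have := hlow d1 hd1. rewrite hqd1. move=> h.
  have : m * dot d d <= dot d (mulmv H d).
    apply (Rmult_le_compat_r (dot d d)) in h; [|lra].
    rewrite /Rdiv Rmult_assoc Rinv_l in h; lra.
  nra.
set M := fun i j => H i j - (if i == j then m else 0).
have hM : forall w i, mulmv M w i = mulmv H w i - m * w i := fun w i => mulmv_shift H m w i.
have hqM : forall w, dot w (mulmv M w) = dot w (mulmv H w) - m * dot w w.
  move=> w. have -> : mulmv M w = fun i => 1 * mulmv H w i + (- m) * w i.
    apply functional_extensionality => i; rewrite hM; ring.
  rewrite dot_linr. ring.
have hsM : sym_mat M.
  move=> i j. rewrite /M hs. by rewrite eq_sym.
have hpM : forall w, 0 <= dot w (mulmv M w).
  move=> w. rewrite hqM.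
  destruct (Rle_lt_or_eq_dec _ _ (dot_ge0 w)) as [hw|h0].
  - set t := sqrt (dot w w).
    have ht0 : 0 < t by apply sqrt_lt_R0.
    have htt : t * t = dot w w by apply sqrt_sqrt; lra.
    have := hlow (fun i => / t * w i).
    rewrite mulmv_scale dot_scalel !dot_scaler -htt. move=> h.
    have h' := h ltac:(field; lra).
    rewrite dot_scalel in h'. have h2 := h'. have : m * (t*t) <= dot w (mulmv H w).
      have e : dot w (mulmv H w) = (/ t * (/ t * dot w (mulmv H w))) * (t * t) by field; lra.
      rewrite e. apply Rmult_le_compat_r; nra.
    lra.
  - rewrite (dot_zero_vec _ (esym h0)) -h0. lra.
have heM : forall e, 0 < e -> exists w, dot w w = 1 /\ dot w (mulmv M w) < e.
  move=> e he. have [w [hw hq]] := happ e he. exists w. split; auto. rewrite hqM hw. lra.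
have [v [hv0 hv]] := kernel_lemma hsM hpM heM.
have heig : is_eigenvalue H m.
  exists v. split; auto. move=> i. have := hv i. rewrite hM. lra.
have := hmin m heig. lra.
Qed.

Lemma least_nat (P : nat -> Prop) N : P N -> exists i, P i /\ forall j, (j < i)%nat -> ~ P j.
Proof.
induction N as [N IH] using (well_founded_induction Wf_nat.lt_wf).
move=> hN. destruct (classic (exists j, (j < N)%nat /\ P j)) as [[j [hj hPj]]|hno].
- apply: (IH j) => //. by apply/ltP.
- exists N. split; auto. move=> j hj hPj. apply hno. exists j. auto.
Qed.

Lemma dot_le_norm n (u v : vec n) : dot u v <= vnorm u * vnorm v.
Proof.
have h := CS u v. rewrite /vnorm.
have hu := dot_ge0 u. have hv := dot_ge0 v.
have e1 := sqrt_sqrt _ hu. have e2 := sqrt_sqrt _ hv.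
have p1 := sqrt_pos (dot u u). have p2 := sqrt_pos (dot v v).
set A := sqrt (dot u u) in e1 p1 *. set B := sqrt (dot v v) in e2 p2 *.
rewrite -e1 -e2 in h. apply Rnot_lt_le => hc.
have hab : 0 <= A * B by nra. have : A*B*(A*B) < dot u v * dot u v by apply Rmult_le_0_lt_compat; lra. nra.
Qed.

Lemma vnorm_scale n (s : R) (d : vec n) : 0 <= s -> vnorm (vscale s d) = s * vnorm d.
Proof. move=> hs. rewrite /vnorm /vscale dot_scalel dot_scaler -Rmult_assoc sqrt_mult.
  rewrite sqrt_square //. nra. apply dot_ge0. Qed.

Lemma line_deriv n (f : vec n -> R) (g : vec n -> vec n) (x d : vec n) s :
  is_gradient f g ->
  derivable_pt_lim (fun t => f (vadd x (vscale t d))) s (dot (g (vadd x (vscale s d))) d).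
Proof.
move=> hg eps heps.
set y := vadd x (vscale s d).
set nd := vnorm d.
have hnd : 0 <= nd by apply sqrt_pos.
have [del [hdel hb]] := hg y (eps / (2 * (nd + 1))) ltac:(apply Rdiv_lt_0_compat; lra).
have hdel' : 0 < del / (nd + 1) by apply Rdiv_lt_0_compat; lra.
exists (mkposreal _ hdel') => h hh0 hh. simpl in hh.
have ev : vadd x (vscale (s + h) d) = vadd y (vscale h d).
  apply functional_extensionality => i. rewrite /y /vadd /vscale. ring.
rewrite ev.
have hvn : vnorm (vscale h d) = Rabs h * nd.
  rewrite /vnorm /vscale dot_scalel dot_scaler -Rmult_assoc sqrt_mult.
  change (h * h) with (Rsqr h). rewrite sqrt_Rsqr_abs //. apply Rle_0_sqr. apply dot_ge0.
have hlt : vnorm (vscale h d) < del.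
  rewrite hvn. have : Rabs h * (nd + 1) < del.
    apply (Rmult_lt_compat_r (nd+1)) in hh; [|lra].
    rewrite /Rdiv Rmult_assoc Rinv_l in hh; lra.
  have := Rabs_pos h. nra.
have hb' := hb _ hlt.
rewrite /vscale dot_scaler in hb'. rewrite hvn in hb'.
have hah : 0 < Rabs h by apply Rabs_pos_lt.
set D := f (vadd y (fun i => h * d i)) - f y in hb' *.
set G := dot (g y) d in hb' *.
have e : D / h - G = (D - h * G) / h by field.
rewrite e /Rdiv Rabs_mult Rabs_inv.
apply (Rmult_lt_reg_r (Rabs h)) => //.
rewrite /Rdiv Rmult_assoc Rinv_l; [|lra].
have : eps / (2 * (nd + 1)) * (Rabs h * nd) < eps * Rabs h.
  have e2 : eps / (2 * (nd + 1)) * (Rabs h * nd) = (eps * Rabs h) * (nd / (2 * (nd+1))) by field; lra.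
  rewrite e2. have : nd / (2 * (nd + 1)) < 1.
    apply (Rmult_lt_reg_r (2 * (nd+1))); [lra|]. rewrite /Rdiv Rmult_assoc Rinv_l; lra.
  have : 0 < eps * Rabs h by nra. nra.
lra.
Qed.

Lemma descent n (f : vec n -> R) (g : vec n -> vec n) (L : R) (x d : vec n) t :
  is_gradient f g -> lipschitz_map g L -> 0 <= t ->
  f (vadd x (vscale t d)) <= f x + t * dot (g x) d + L / 2 * (t * t) * dot d d.
Proof.
move=> hg hL ht.
destruct (Rle_lt_or_eq_dec _ _ ht) as [ht0|ht0]; last first.
  subst t. have -> : vadd x (vscale 0 d) = x.
    apply functional_extensionality => i; rewrite /vadd /vscale; ring.
  lra.
set G0 := dot (g x) d.
set c := L / 2 * dot d d.
set phi := fun s => f (vadd x (vscale s d)).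
set pa := fun y => id y * G0.
set pb := mult_real_fct c (id * id)%F.
set h := (phi - (pa + pb))%F.
have hder : forall s, derivable_pt_lim h s
   (dot (g (vadd x (vscale s d))) d - (1 * G0 + c * (1 * id s + id s * 1))).
  move=> s. apply derivable_pt_lim_minus. apply line_deriv => //.
  apply derivable_pt_lim_plus. apply derivable_pt_lim_scal_right, derivable_pt_lim_id.
  apply derivable_pt_lim_scal, derivable_pt_lim_mult; apply derivable_pt_lim_id.
pose pr : derivable h := fun s => exist _ _ (hder s).
have [c0 [hmvt hc0]] := MVT_cor1 h 0 t pr ht0.
have hdv : derive_pt h c0 (pr c0) <= 0.
  rewrite /derive_pt /pr /=. rewrite /id /G0 /c.
  set y := vadd x (vscale c0 d).
  have e1 : dot (g y) d - dot (g x) d = dot (vsub (g y) (g x)) d.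
    rewrite /vsub. have -> : (fun i => g y i - g x i) = (fun i => 1 * g y i + (-1) * g x i).
      apply functional_extensionality => i; ring.
    rewrite dot_linl. ring.
  have h1 := dot_le_norm (vsub (g y) (g x)) d.
  have h2 := hL y x.
  have e3 : vsub y x = vscale c0 d.
    apply functional_extensionality => i; rewrite /y /vsub /vadd /vscale; ring.
  rewrite e3 vnorm_scale in h2; [|lra].
  have hnd := sqrt_pos (dot d d).
  have hnn := sqrt_sqrt _ (dot_ge0 d).
  have hvs := sqrt_pos (dot (vsub (g y) (g x)) (vsub (g y) (g x))).
  rewrite /vnorm in h1 h2.
  set nd := sqrt (dot d d) in hnd hnn h1 h2.
  set ng := sqrt (dot (vsub (g y) (g x)) (vsub (g y) (g x))) in h1 h2 hvs.
  have : ng * nd <= L * (c0 * nd) * nd by apply Rmult_le_compat_r.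
  nra.
have : h t <= h 0 by nra.
rewrite /h /phi /pa /pb /minus_fct /plus_fct /mult_real_fct /mult_fct /id.
have -> : vadd x (vscale 0 d) = x.
  apply functional_extensionality => i; rewrite /vadd /vscale; ring.
rewrite /G0 /c. nra.
Qed.

Lemma conv_step n (psi : vec n -> option R) x d pd px t : ext_convex psi ->
  psi (vadd x d) = Some pd -> psi x = Some px -> 0 <= t <= 1 ->
  exists p, psi (vadd x (vscale t d)) = Some p /\ p <= t * pd + (1 - t) * px.
Proof.
move=> hc h1 h2 ht. have := hc _ _ _ _ t h1 h2 ht.
have -> : vadd (vscale t (vadd x d)) (vscale (1 - t) x) = vadd x (vscale t d).
  apply functional_extensionality => i; rewrite /vadd /vscale; ring.
case: (psi (vadd x (vscale t d))) => [p|] //= hp. by exists p.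
Qed.

Lemma pow_in01 b i : 0 < b < 1 -> 0 < b ^ i <= 1.
Proof. move=> hb. induction i as [|i IH]; simpl; nra. Qed.

Unset Implicit Arguments.
Set Strict Implicit.

Theorem corollary1 (n : nat) (f : vec n -> R) (gradf : vec n -> vec n) (L : R)
    (psi : vec n -> option R) (x : vec n) (px : R) (H : mat n) (sigma eta : R)
    (d : vec n) :
  assumption1 f gradf L psi ->
  psi x = Some px ->
  sym_mat H ->
  lambda_min_is H sigma -> 0 < sigma ->
  0 <= eta < 1 ->
  eta_inexact (Qmodel gradf psi x px H) eta d ->
  exists pd, psi (vadd x d) = Some pd /\
    let Delta := dot (gradf x) d + pd - px in
    Delta <= - (1 / (1 + sqrt eta)) * dot d (mulmv H d) /\
    - (1 / (1 + sqrt eta)) * dot d (mulmv H d)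
      <= - (sigma / (1 + sqrt eta)) * (vnorm d) ^ 2 /\
    (forall beta gamma, 0 < beta < 1 -> 0 < gamma < 1 ->
      exists i : nat,
        ext_le (Fext f psi (vadd x (vscale (beta ^ i) d)))
               (Some (f x + px + beta ^ i * gamma * Delta)) /\
        (forall j : nat, (j < i)%nat ->
          ~ ext_le (Fext f psi (vadd x (vscale (beta ^ j) d)))
                   (Some (f x + px + beta ^ j * gamma * Delta))) /\
        Rmin 1 (2 * beta * (1 - gamma) * sigma / (L * (1 + sqrt eta))) <= beta ^ i).
Proof.
move=> [hg [hL [hLip [hconv _]]]] hpx hs hlam hsig heta
  [Qstar [qd [[hglb1 _] [hQd hineq]]]].
rewrite /Qmodel in hQd.
case E: (psi (vadd x d)) hQd => [pd|] //= [hqd].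
exists pd. split => //.
set G := dot (gradf x) d.
set a := dot d (mulmv H d).
set dd := dot d d.
have hspec : sigma * dd <= a := spectral_bound hs hlam d.
have hdd : 0 <= dd := dot_ge0 d.
have ha : 0 <= a by nra.
have key : forall t, 0 <= t <= 1 -> Qstar <= t * (G + pd - px) + t * t * a / 2.
  move=> t ht. have [p [hp hple]] := conv_step hconv E hpx ht.
  have := hglb1 (dot (gradf x) (vscale t d) + / 2 * dot (vscale t d) (mulmv H (vscale t d)) + p - px).
  move=> h. have h' : Qstar <= dot (gradf x) (vscale t d) + / 2 * dot (vscale t d) (mulmv H (vscale t d)) + p - px.
    apply h. exists (vscale t d). rewrite /Qmodel hp //.
  rewrite /vscale mulmv_scale dot_scalel !dot_scaler in h'. fold G a in h'. nra.
have hq0 := key 0 ltac:(lra).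
set r := sqrt eta.
have hr0 : 0 <= r := sqrt_pos eta.
have hrr : r * r = eta by apply sqrt_sqrt; lra.
have hr1 : r < 1 by nra.
rewrite -hqd in hineq.
set D := G + pd - px.
have hmain : D + a / 2 <= (1 - eta) * Qstar.
  rewrite /D. fold G a in hineq. nra.
have hDr : D * (1 + r) <= - a.
  destruct (Rle_lt_or_eq_dec _ _ ha) as [ha0|ha0].
  - destruct (Rle_or_lt D (-a)) as [h1|h1]. nra.
    destruct (Rle_or_lt D 0) as [h2|h2].
    + have ht : 0 <= - D / a <= 1.
        split. apply Rmult_le_pos; [lra|]. left; apply Rinv_0_lt_compat; lra.
        apply (Rmult_le_reg_r a) => //. rewrite /Rdiv Rmult_assoc Rinv_l; lra.
      have hk := key _ ht.
      have e : - D / a * D + - D / a * (- D / a) * a / 2 = - (D * D) / (2 * a) by field; lra.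
      rewrite /D in e. rewrite e in hk.
      have hk2 : Qstar * (2 * a) <= - (D * D).
        apply (Rmult_le_compat_r (2*a)) in hk; [|lra].
        have e2 : - (D * D) / (2 * a) * (2 * a) = - (D * D) by field; lra.
        rewrite /D e2 in hk. exact hk.
      have hm2 : D * (2 * a) + a * a <= (1 - eta) * (- (D * D)).
        have : (D + a / 2) * (2*a) <= (1 - eta) * Qstar * (2*a) by apply Rmult_le_compat_r; lra.
        have : (1 - eta) * Qstar * (2*a) <= (1 - eta) * (- (D*D)).
          rewrite Rmult_assoc. apply Rmult_le_compat_l; lra.
        lra.
      have hprod : ((1 - r) * D + a) * ((1 + r) * D + a) <= 0.
        have e3 : ((1 - r) * D + a) * ((1 + r) * D + a) = (1 - r*r) * (D*D) + 2*a*D + a*a by ring.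
        rewrite e3 hrr. lra.
      have hpos : 0 < (1 - r) * D + a by nra.
      apply Rnot_lt_le => hc. have : 0 < ((1 - r) * D + a) * ((1 + r) * D + a).
        apply Rmult_lt_0_compat; lra.
      lra.
    + exfalso. have := key 0 ltac:(lra). nra.
  - rewrite -ha0. have : D <= 0 by nra. nra.
split.
  have e : - (1 / (1 + r)) * a = - a / (1 + r) by field; lra.
  rewrite e. apply (Rmult_le_reg_r (1 + r)); [lra|].
  rewrite /Rdiv Rmult_assoc Rinv_l; lra.
split.
  have hvn : vnorm d * (vnorm d * 1) = dd. rewrite /vnorm Rmult_1_r sqrt_sqrt //.
  rewrite hvn. have e1 : - (1 / (1 + r)) * a = - a * / (1 + r) by field; lra.
  have e2 : - (sigma / (1 + r)) * dd = - (sigma * dd) * / (1 + r) by field; lra.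
  rewrite e1 e2. apply Rmult_le_compat_r. left; apply Rinv_0_lt_compat; lra. lra.
move=> beta gamma hb hgm.
set cst := 2 * (1 - gamma) * sigma / (L * (1 + r)).
have hcst : 0 < cst.
  apply Rdiv_lt_0_compat. nra. nra.
set cond := fun i : nat => ext_le (Fext f psi (vadd x (vscale (beta ^ i) d)))
               (Some (f x + px + beta ^ i * gamma * D)).
have hsuff : forall i, beta ^ i <= cst -> cond i.
  move=> i hi. have hal := pow_in01 i hb.
  set al := beta ^ i in hi hal *.
  have [p [hp hple]] := conv_step hconv E hpx (conj (Rlt_le _ _ (proj1 hal)) (proj2 hal)).
  rewrite /cond /Fext hp /=.
  have hdes := descent x d hg hLip (Rlt_le _ _ (proj1 hal)). fold G dd in hdes.
  have hal2 : al * (L * (1 + r)) <= 2 * (1 - gamma) * sigma.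
    apply (Rmult_le_compat_r (L * (1 + r))) in hi; [|nra].
    rewrite /cst /Rdiv Rmult_assoc Rinv_l in hi; nra.
  have hD2 : D * (1 + r) <= - (sigma * dd) by nra.
  have hneed : (al * (1 - gamma) * D + L / 2 * (al * al) * dd) * (1 + r) <= 0.
    have e : (al * (1 - gamma) * D + L / 2 * (al * al) * dd) * (1 + r)
           = al * (1 - gamma) * (D * (1 + r)) + (al * dd / 2) * (al * (L * (1 + r))) by field.
    rewrite e.
    have h1 : al * (1 - gamma) * (D * (1 + r)) <= al * (1 - gamma) * (- (sigma * dd)).
      apply Rmult_le_compat_l; nra.
    have h2 : (al * dd / 2) * (al * (L * (1 + r))) <= (al * dd / 2) * (2 * (1 - gamma) * sigma).
      apply Rmult_le_compat_l; nra.
    nra.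
  have hneed2 : al * (1 - gamma) * D + L / 2 * (al * al) * dd <= 0.
    apply Rnot_lt_le => hc. have : 0 < (al * (1 - gamma) * D + L / 2 * (al * al) * dd) * (1 + r).
      apply Rmult_lt_0_compat; lra.
    lra.
  rewrite /D in hneed2 *. fold al. nra.
have [N hN] := pow_lt_1_zero beta ltac:(rewrite Rabs_right; lra) (Rmin 1 cst)
  ltac:(apply Rmin_glb_lt; lra).
have hcN : cond N.
  apply hsuff. have := hN N (le_n N). rewrite Rabs_right.
  have := Rmin_r 1 cst. lra. have := pow_in01 N hb. lra.
have [i [hi hmin]] := least_nat hcN.
exists i. split; [exact hi|]. split; [exact hmin|].
destruct i as [|k].
  simpl. apply Rmin_l.
have hk : ~ cond k := hmin k (ltnSn k).
have hkc : cst < beta ^ k.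
  apply Rnot_le_lt => hc. apply hk. apply hsuff. exact hc.
have e : 2 * beta * (1 - gamma) * sigma / (L * (1 + r)) = beta * cst.
  rewrite /cst. field. nra.
rewrite e. apply Rle_trans with (beta * cst). apply Rmin_r.
simpl. nra.
Qed.
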